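(* Let $y(t)$ solve $\dot y_k=v_k(Q(y))$, $k\in\mathcal{N}$, and let $x(t)=Q(y(t))$. If $p_k\in\mathcal{X}_k$ is dominated, or even iteratively dominated, then $p_k$ becomes extinct along $x(t)$, i.e. $\min\{x_{k\alpha}(t):\alpha\in\operatorname{supp}(p_k)\}\to0$ as $t\to\infty$.
   Context: Setting: a finite game with players $\mathcal{N}=\{1,\dots,N\}$, finite action sets $\mathcal{A}_k$, mixed strategies $\mathcal{X}_k=\Delta(\mathcal{A}_k)$, $\mathcal{X}=\prod_k\mathcal{X}_k$, multilinear expected payoffs $u_k$, payoff vectors $v_k(x)=(u_k(\alpha;x_{-k}))_{\alpha\in\mathcal{A}_k}$. Each player has a penalty function $h_k$ on $\mathcal{X}_k$ (continuous, $C^\infty$ on the relative interior of each face, strongly convex: $h(tx_1+(1-t)x_2)\le th(x_1)+(1-t)h(x_2)-\tfrac12Kt(1-t)\|x_1-x_2\|^2$ for some $K>0$), with choice map $Q_k(y_k)=\arg\max_{x_k\in\mathcal{X}_k}\{\langle y_k,x_k\rangle-h_k(x_k)\}$; $Q=(Q_k)_k$. $p_k$ is dominated by $p_k'$ if $u_k(p_k;x_{-k})<u_k(p_k';x_{-k})$ for all $x_{-k}\in\prod_{\ell\ne k}\mathcal{X}_\ell$. Iterated elimination: $\mathcal{A}_k^0=\mathcal{A}_k$; given $\mathcal{A}^r_\ell$, let $\mathcal{X}_\ell^r=\Delta(\mathcal{A}_\ell^r)$ and $\mathcal{A}_k^{r+1}$ be the actions in $\mathcal{A}_k^r$ not dominated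 (by some element of $\mathcal{X}_k^r$) against all $x_{-k}\in\prod_{\ell\ne k}\mathcal{X}_\ell^r$. $p_k$ is iteratively dominated if for some $r\ge0$, $p_k\in\mathcal{X}_k^r$ and there is $p_k'\in\mathcal{X}_k^r$ with $u_k(p_k';x_{-k})>u_k(p_k;x_{-k})$ for all $x_{-k}\in\prod_{\ell\ne k}\mathcal{X}_\ell^r$. *)

(* Defs.v *)
From HB Require Import structures.
From mathcomp Require Import all_boot all_order all_algebra.
From mathcomp Require Import all_classical all_reals all_analysis.
Set Implicit Arguments. Unset Strict Implicit. Unset Printing Implicit Defensive.
Import Order.TTheory GRing.Theory Num.Theory.
Import numFieldNormedType.Exports.
Local Open Scope classical_set_scope.
Local Open Scope ring_scope.

Section Game.
Variable R : realType.

Definition mixed n (z : 'rV[R]_n) : Prop :=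
  (forall a, 0 <= z 0 a) /\ \sum_(a < n) z 0 a = 1.

Definition mixed_on n (A : set 'I_n) (z : 'rV[R]_n) : Prop :=
  mixed z /\ (forall a, z 0 a != 0 -> A a).

Definition pairing n (y z : 'rV[R]_n) : R := \sum_(a < n) y 0 a * z 0 a.

Variables (N : nat) (n : 'I_N -> nat).

Definition profile := forall k : 'I_N, 'rV[R]_(n k).
Definition pure_profile := {dffun forall l : 'I_N, 'I_(n l)}.

(* u_k(p_k ; x_{-k}) : multilinear expected payoff of player k playing p
   against the opponents' components of x (x k is ignored) *)
Definition udev (U : forall k : 'I_N, pure_profile -> R) (k : 'I_N)
  (p : 'rV[R]_(n k)) (x : profile) : R :=
  \sum_(a : pure_profile)
     U k a * p 0 (a k) * \prod_(l < N | l != k) x l 0 (a l).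

Definition upay (U : forall k : 'I_N, pure_profile -> R) (k : 'I_N)
  (x : profile) : R := udev U (x k) x.

Definition payv (U : forall k : 'I_N, pure_profile -> R) (k : 'I_N)
  (x : profile) : 'rV[R]_(n k) :=
  \row_(a < n k) udev U (delta_mx 0 a) x.

Fixpoint surv (U : forall k : 'I_N, pure_profile -> R) (r : nat)
  : forall k : 'I_N, set 'I_(n k) :=
  match r with
  | 0 => fun k => setT
  | r'.+1 => fun k =>
      let S := surv U r' in
      [set a : 'I_(n k) | S k a /\
        ~ (exists p' : 'rV[R]_(n k), mixed_on (S k) p' /\
             forall x : profile,
               (forall l, l != k -> mixed_on (S l) (x l)) ->
               udev U (delta_mx 0 a) x < udev U p' x)]
  end.

Definition dominated (U : forall k : 'I_N, pure_profile -> R) (k : 'I_N)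
  (p : 'rV[R]_(n k)) : Prop :=
  mixed p /\
  exists p' : 'rV[R]_(n k), mixed p' /\
    forall x : profile, (forall l, l != k -> mixed (x l)) ->
      udev U p x < udev U p' x.

Definition iter_dominated (U : forall k : 'I_N, pure_profile -> R)
  (k : 'I_N) (p : 'rV[R]_(n k)) : Prop :=
  exists r : nat, mixed_on (@surv U r k) p /\
    exists p' : 'rV[R]_(n k), mixed_on (@surv U r k) p' /\
      forall x : profile, (forall l, l != k -> mixed_on (@surv U r l) (x l)) ->
        udev U p x < udev U p' x.

End Game.
Arguments surv {R N n} U r k _.

Section Penalty.
Variable R : realType.

Fixpoint iter_dd n (f : 'rV[R]_n -> R) (ds : seq 'rV[R]_n) : 'rV[R]_n -> R :=
  match ds with
  | [::] => f
  | d :: ds' => fun z => 'D_d (iter_dd f ds') z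
  end.

Definition face_relint n (S : {set 'I_n}) : set 'rV[R]_n :=
  [set z | mixed z /\ forall a, (0 < z 0 a) <-> (a \in S)].

Definition face_tangent n (S : {set 'I_n}) : set 'rV[R]_n :=
  [set d | (forall a, a \notin S -> d 0 a = 0) /\ \sum_(a < n) d 0 a = 0].

(* h is C^oo on the relative interior of each face: all iterated directional
   derivatives along the face exist there and are continuous there *)
Definition smooth_on_faces n (h : 'rV[R]_n -> R) : Prop :=
  forall (S : {set 'I_n}) (ds : seq 'rV[R]_n),
    (forall d, d \in ds -> face_tangent S d) ->
    (forall z d, face_relint S z -> face_tangent S d ->
        derivable (iter_dd h ds) z d) /\
    {within face_relint S, continuous (iter_dd h ds)}.

Definition strongly_convex_on_simplex n (h : 'rV[R]_n -> R) : Prop :=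
  exists K : R, 0 < K /\
    forall x1 x2 : 'rV[R]_n, mixed x1 -> mixed x2 ->
    forall t : R, 0 <= t <= 1 ->
      h (t *: x1 + (1 - t) *: x2) <=
        t * h x1 + (1 - t) * h x2 - 2^-1 * K * t * (1 - t) * `|x1 - x2| ^+ 2.

Definition penalty n (h : 'rV[R]_n -> R) : Prop :=
  {within [set z | mixed z], continuous h} /\ smooth_on_faces h /\
  strongly_convex_on_simplex h.

Definition is_choice n (h : 'rV[R]_n -> R) (y z : 'rV[R]_n) : Prop :=
  mixed z /\
  forall z', mixed z' -> pairing y z' - h z' <= pairing y z - h z.

(* min { z_alpha : alpha in supp p } as an extended real (+oo on empty set) *)
Definition supp_min n (p z : 'rV[R]_n) : \bar R :=
  \big[Order.min/+oo%E]_(a < n | p 0 a != 0) (z 0 a)%:E.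

End Penalty.

(* Main.v *)
Require Import Defs.
From HB Require Import structures.
From mathcomp Require Import all_boot all_order all_algebra.
From mathcomp Require Import all_classical all_reals all_analysis.
From mathcomp Require Import lra ring.
Import Order.TTheory GRing.Theory Num.Theory.
Import numFieldNormedType.Exports.
Local Open Scope classical_set_scope.
Local Open Scope ring_scope.


Lemma sum_prod_dep (R : comNzRingType) (I : finType) (T_ : I -> finType)
  (F : forall i, T_ i -> R) :
  \sum_(b : {dffun forall i : I, T_ i}) \prod_i F i (b i) =
  \prod_i \sum_(j : T_ i) F i j.
Proof.
rewrite (reindex (@dffun_of_fprod I T_)); last first.
  by apply: onW_bij; exact: dffun_of_fprod_bij.
have E := (@big_fprod R 0 1 *%R +%R I T_ (fun i => [ffun j => F i j])).
transitivity (\sum_(t : fprod T_) \prod_(i in I) [ffun j => F i j] (t i) : R).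
  by apply: eq_bigr => t _; apply: eq_bigr => i _; rewrite !ffunE.
rewrite E.
rewrite -(bigA_distr_big_dep (fun i j => tagged_with T_ i j) (fun i j => untag 0 [ffun j => F i j] j)).
apply: eq_bigr => i _.
rewrite (big_tag _ i); apply: eq_bigr => j _.
by congr (untag _ _ j); apply: boolp.funext => z; rewrite ffunE.
Qed.


Section Decomp.
Variables (R : realType) (N : nat) (n : 'I_N -> nat).
Variable U : forall k : 'I_N, pure_profile n -> R.
Variable k : 'I_N.

Definition vx (b : pure_profile n) : profile R n := fun l => delta_mx 0 (b l).
Definition Gw (x : profile R n) l (i : 'I_(n l)) : R :=
  if l == k then (n k)%:R^-1 else x l 0 i.
Definition Wt (x : profile R n) (b : pure_profile n) : R :=
  \prod_l Gw x l (b l).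

Lemma delta_entry m (i j : 'I_m) : (delta_mx 0 i : 'rV[R]_m) 0 j = (i == j)%:R.
Proof. by rewrite mxE eqxx eq_sym. Qed.

Lemma prod_special (F : forall l, 'I_(n l) -> R) l0 :
  (forall l, l != l0 -> \sum_i F l i = 1) ->
  \prod_l \sum_i F l i = \sum_i F l0 i.
Proof.
move=> H; rewrite (bigD1 l0) //= [X in _ * X]big1 ?mulr1 // => l /H //.
Qed.

Lemma sumGk (x : profile R n) : (0 < n k)%N -> \sum_i Gw x k i = 1.
Proof.
move=> nk; rewrite /Gw eqxx sumr_const card_ord.
have nz : (n k)%:R != 0 :> R by rewrite pnatr_eq0 -lt0n.
by rewrite -(mulr_natr ((n k)%:R^-1)) mulVf.
Qed.

Lemma udev_decomp (q : 'rV[R]_(n k)) (x : profile R n) : (0 < n k)%N ->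
  udev U q x = \sum_b Wt x b * udev U q (vx b).
Proof.
move=> nk.
rewrite /udev.
under [RHS]eq_bigr do rewrite mulr_sumr.
rewrite exchange_big /=; apply: eq_bigr => a _.
under [RHS]eq_bigr do rewrite mulrCA.
rewrite -mulr_sumr; congr (_ * _); symmetry.
transitivity (\sum_(b : pure_profile n) \prod_l
   (Gw x l (b l) * (if l == k then 1 else (b l == a l)%:R))).
  apply: eq_bigr => b _; rewrite big_split /= /Wt; congr (_ * _).
  rewrite [LHS]big_mkcond; apply: eq_bigr => l _; rewrite /vx delta_entry.
  by case: (l == k).
rewrite (@sum_prod_dep R _ (fun l => (ordinal (n l) : finType)) (fun l i => Gw x l i * (if l == k then 1 else (i == a l)%:R))).
rewrite (bigD1 k) //=.
under eq_bigr do rewrite eqxx mulr1.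
rewrite sumGk // mul1r; apply: eq_bigr => l lk.
rewrite (bigD1 (a l)) //= big1 ?addr0.
  by rewrite /Gw (negbTE lk) eqxx mulr1.
by move=> i ia; rewrite (negbTE lk) (negbTE ia) mulr0.
Qed.

Lemma sum_Gw (x : profile R n) l : (0 < n k)%N ->
  (forall l, l != k -> \sum_i x l 0 i = 1) -> \sum_i Gw x l i = 1.
Proof.
move=> nk H; have [->|lk] := eqVneq l k; first exact: sumGk.
by rewrite -(H l lk); apply: eq_bigr => i _; rewrite /Gw (negbTE lk).
Qed.

Lemma sumWt (x : profile R n) : (0 < n k)%N ->
  (forall l, l != k -> \sum_i x l 0 i = 1) -> \sum_b Wt x b = 1.
Proof.
move=> nk H; rewrite /Wt.
rewrite (@sum_prod_dep R _ (fun l => (ordinal (n l) : finType)) (fun l i => Gw x l i)).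
by rewrite big1 // => l _; apply: sum_Gw.
Qed.

Lemma Wt_ge0 (x : profile R n) b :
  (forall l, l != k -> forall i, 0 <= x l 0 i) -> 0 <= Wt x b.
Proof.
move=> H; rewrite /Wt; apply: prodr_ge0 => l _; rewrite /Gw.
by case: eqP => [_|/eqP lk]; [rewrite invr_ge0 ler0n | exact: H].
Qed.

Lemma badsum (x : profile R n) (Sb : forall l, 'I_(n l) -> bool) l0 :
  (0 < n k)%N -> l0 != k -> (forall l, l != k -> \sum_i x l 0 i = 1) ->
  \sum_b Wt x b * (~~ Sb l0 (b l0))%:R = \sum_i x l0 0 i * (~~ Sb l0 i)%:R.
Proof.
move=> nk l0k H.
transitivity (\sum_(b : pure_profile n) \prod_l
   (Gw x l (b l) * (if l == l0 then (~~ Sb l (b l))%:R else 1))).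
  apply: eq_bigr => b _; rewrite big_split /= /Wt; congr (_ * _).
  rewrite (bigD1 l0) //= eqxx big1 ?mulr1 // => l /negbTE -> //.
rewrite (@sum_prod_dep R _ (fun l => (ordinal (n l) : finType))
  (fun l i => Gw x l i * (if l == l0 then (~~ Sb l i)%:R else 1))).
rewrite (@prod_special _ l0).
  by apply: eq_bigr => i _; rewrite eqxx /Gw (negbTE l0k).
move=> l /negbTE ->; under eq_bigr do rewrite mulr1; exact: sum_Gw.
Qed.

Lemma gap (q : 'rV[R]_(n k)) (x : profile R n) (Sb : forall l, 'I_(n l) -> bool)
  (d C : R) : (0 < n k)%N -> 0 <= d -> 0 <= C ->
  (forall l, l != k -> mixed (x l)) ->
  (forall b : pure_profile n, (forall l, l != k -> Sb l (b l)) -> d <= udev U q (vx b)) ->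
  (forall b : pure_profile n, - C <= udev U q (vx b)) ->
  d - (d + C) * \sum_(l | l != k) \sum_i x l 0 i * (~~ Sb l i)%:R
    <= udev U q x.
Proof.
move=> nk d0 C0 mx good bnd.
have H1 : forall l, l != k -> \sum_i x l 0 i = 1 by move=> l /mx [].
have H0 : forall l, l != k -> forall i, 0 <= x l 0 i by move=> l /mx [].
rewrite udev_decomp //.
have -> : d - (d + C) * \sum_(l | l != k) \sum_i x l 0 i * (~~ Sb l i)%:R =
  \sum_b Wt x b * (d - (d + C) * \sum_(l | l != k) (~~ Sb l (b l))%:R).
  under [RHS]eq_bigr do rewrite mulrBr.
  rewrite sumrB -mulr_suml sumWt // mul1r; congr (_ - _).
  under [RHS]eq_bigr do rewrite mulrCA mulr_sumr.
  rewrite -mulr_sumr; congr (_ * _); rewrite exchange_big /=.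
  by apply: eq_bigr => l lk; rewrite badsum.
apply: ler_sum => b _; apply: ler_wpM2l; first exact: Wt_ge0.
case: (boolP [forall l, (l != k) ==> Sb l (b l)]) => [/forallP G|].
  rewrite big1 ?mulr0 ?subr0; first by apply: good => l lk; have := G l; rewrite lk.
  by move=> l lk; have := G l; rewrite lk /= => ->.
rewrite negb_forall => /existsP [l0]; rewrite negb_imply => /andP [l0k Sl0].
apply: le_trans (bnd b).
have : 1 <= \sum_(l | l != k) (~~ Sb l (b l))%:R :> R.
  rewrite (bigD1 l0) //= Sl0 lerDl; apply: sumr_ge0 => *; exact: ler0n.
move=> H; have := ler_wpM2l (addr_ge0 d0 C0) H; rewrite mulr1.
set P := (d + C) * _; lra.
Qed.
End Decomp.

Module MC.
Set Implicit Arguments. Unset Strict Implicit.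

Section Lin.
Variables (R : realType) (N : nat) (n : 'I_N -> nat).
Variable U : forall k : 'I_N, pure_profile n -> R.

Lemma udevB k (p p' : 'rV[R]_(n k)) x :
  udev U (p' - p) x = udev U p' x - udev U p x.
Proof.
rewrite /udev -sumrB; apply: eq_bigr => b _; rewrite !mxE; lra.
Qed.

Lemma pairing_payv k (x : profile R n) (q : 'rV[R]_(n k)) :
  pairing (payv U k x) q = udev U q x.
Proof.
rewrite /pairing /payv /udev.
under eq_bigr do rewrite mxE mulr_suml.
rewrite exchange_big /=; apply: eq_bigr => b _.
rewrite (bigD1 (b k)) //= [X in _ + X]big1 ?addr0.
  by rewrite delta_entry eqxx mulr1n; ring.
by move=> a ab; rewrite delta_entry (negbTE ab) mulr0n; ring.
Qed.

End Lin.

End MC.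
Import MC.

Module MD.
Set Implicit Arguments. Unset Strict Implicit.

Lemma is_derive_pairing (R : realType) m (Y : R -> 'rV[R]_m) (Y' : 'rV[R]_m)
  (q : 'rV[R]_m) (t : R) :
  is_derive t 1 Y Y' -> is_derive t 1 (fun s => pairing (Y s) q) (pairing Y' q).
Proof.
move=> H.
have dY : derivable Y t 1 by case: H.
have Hc a : is_derive t 1 (fun s => Y s 0 a) (Y' 0 a).
  have da : derivable (fun s => Y s 0 a) t 1 by move/derivable_mxP: dY; apply.
  apply: DeriveDef => //.
  have := derive_mx dY; rewrite derive_val => ->; by rewrite mxE.
have -> : (fun s => pairing (Y s) q) = \sum_(a < m) (fun s => Y s 0 a * q 0 a).
  by apply: boolp.funext => s; rewrite fct_sumE.
rewrite /pairing; apply: is_derive_sum => a.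
have -> : (fun s => Y s 0 a * q 0 a) = q 0 a \*: (fun s => Y s 0 a).
  by apply: boolp.funext => s /=; rewrite mulrC.
rewrite mulrC; exact: is_deriveZ.
Qed.

Lemma is_derive_cont (R : realType) (f : R -> R) (t d : R) :
  is_derive t 1 f d -> {for t, continuous f}.
Proof.
by case=> /derivable1_diffP/differentiable_continuous.
Qed.

End MD.
Import MD.


Lemma sum_coord_cont (R : realType) m (r : seq 'I_m) :
  continuous (fun z : 'rV[R]_m => \sum_(a <- r) z 0 a).
Proof.
elim: r => [|a r IH] z.
  under [fun _ => _]boolp.funext do rewrite big_nil.
  exact: cst_continuous.
under [fun _ => _]boolp.funext do rewrite big_cons.
apply: (@continuousD _ _ _ (fun z : 'rV[R]_m => z 0 a) (fun z => \sum_(a <- r) z 0 a)).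
  exact: coord_continuous.
exact: IH.
Qed.

Lemma simplex_closed (R : realType) m : closed [set z : 'rV[R]_m | mixed z].
Proof.
have -> : [set z : 'rV[R]_m | mixed z] =
   (\bigcap_(a in [set: 'I_m]) ((fun z : 'rV[R]_m => z 0 a) @^-1` [set x | 0 <= x]))
   `&` ((fun z : 'rV[R]_m => \sum_(a < m) z 0 a) @^-1` [set x | x = 1]).
  apply/seteqP; split => z /=.
    by case=> H1 H2; split => // a _; exact: H1.
  by case=> H1 H2; split => // a; exact: H1.
apply: closedI.
  apply: closed_bigI => a _; apply: preimage_closed; last exact: closed_ge.
  by move=> z _; exact: coord_continuous.
apply: preimage_closed; last exact: closed_eq.
by move=> z _; exact: sum_coord_cont.
Qed.

Lemma mixed_le1 (R : realType) m (z : 'rV[R]_m) a : mixed z -> z 0 a <= 1.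
Proof.
case=> H0 H1; rewrite -H1 (bigD1 a) //= lerDl; exact: sumr_ge0.
Qed.

Lemma simplex_compact (R : realType) m : compact [set z : 'rV[R]_m | mixed z].
Proof.
apply: (@subclosed_compact _ _ [set v : 'rV[R]_m | forall i, `[(0:R), 1]%classic (v ord0 i)]).
- exact: simplex_closed.
- apply: (@rV_compact _ _ (fun=> `[(0:R), 1]%classic)).
  by move=> _; apply: segment_compact.
move=> z mz i /=; rewrite in_itv /=; apply/andP; split.
  by case: mz.
exact: mixed_le1.
Qed.

Lemma delta_mixed (R : realType) m (a : 'I_m) : mixed (delta_mx 0 a : 'rV[R]_m).
Proof.
split => [b|]; first by rewrite mxE ler0n.
rewrite (bigD1 a) //= big1 ?addr0; first by rewrite mxE !eqxx.
by move=> b ba; rewrite mxE (negbTE ba) andbF.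
Qed.

Lemma hmax (R : realType) m (h : 'rV[R]_m -> R) : (0 < m)%N -> penalty h ->
  exists M, forall z, mixed z -> h z <= M.
Proof.
move=> m0 [hc _].
have ne : [set z : 'rV[R]_m | mixed z] !=set0.
  by exists (delta_mx 0 (Ordinal m0)); exact: delta_mixed.
have [c _ Hc] := EVT_max_rV ne (simplex_compact R m) hc.
by exists (h c) => z mz; apply: Hc; rewrite inE.
Qed.

Module MF.
Set Implicit Arguments. Unset Strict Implicit.

Lemma pairing0 (R : realType) m (z : 'rV[R]_m) : pairing 0 z = 0.
Proof. by rewrite /pairing big1 // => a _; rewrite mxE mul0r. Qed.

Lemma hmin (R : realType) m (h : 'rV[R]_m -> R) x0 :
  is_choice h 0 x0 -> forall z, mixed z -> h x0 <= h z.
Proof.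
case=> _ H z mz; have := H z mz; rewrite !pairing0 !sub0r; by rewrite lerN2.
Qed.

Lemma opt_bound (R : realType) m (h : 'rV[R]_m -> R) (w x p : 'rV[R]_m) (e M : R) :
  is_choice h w x -> mixed p -> 0 < e -> e <= 1 ->
  (forall a, p 0 a != 0 -> e <= x 0 a) -> (forall z, mixed z -> h z <= M) ->
  pairing w x - pairing w p <= (M - h x) / e.
Proof.
move=> [mx opt] mp e0 e1 xe hM.
set z := x + e *: (x - p).
have mz : mixed z.
  split.
    move=> a; rewrite !mxE.
    have [pa0|pa] := eqVneq (p 0 a) 0.
      rewrite pa0; have := (proj1 mx) a; nra.
    have := xe a pa; have := @mixed_le1 _ _ _ a mp; have := (proj1 mp) a; nra.
  under eq_bigr do rewrite !mxE.
  rewrite big_split /= -mulr_sumr sumrB (proj2 mx) (proj2 mp); lra.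
have Ez : pairing w z = pairing w x + e * (pairing w x - pairing w p).
  rewrite /pairing -sumrB mulr_sumr -big_split /=.
  by apply: eq_bigr => a _; rewrite !mxE; ring.
have := opt z mz; rewrite Ez => H.
have H2 : e * (pairing w x - pairing w p) <= M - h x.
  have := hM z mz; lra.
by rewrite ler_pdivlMr // mulrC.
Qed.

End MF.
Import MF.


Lemma pairingB (R : realType) m (w a b : 'rV[R]_m) :
  pairing w (a - b) = pairing w a - pairing w b.
Proof. by rewrite /pairing -sumrB; apply: eq_bigr => i _; rewrite !mxE; ring. Qed.

Lemma vx_mixed_on (R : realType) N (n : 'I_N -> nat) (S : forall l, set 'I_(n l))
   (b : pure_profile n) l : S l (b l) -> mixed_on (S l) (vx R N n b l).
Proof.
move=> Sb; split; first exact: delta_mixed.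
move=> a; rewrite /vx delta_entry; case: (b l =P a) => [<- //|]; by rewrite mulr0n eqxx.
Qed.

Section Main.
Variables (R : realType) (N : nat) (n : 'I_N -> nat).
Variable U : forall k : 'I_N, pure_profile n -> R.
Variable h : forall k : 'I_N, 'rV[R]_(n k) -> R.
Variable Q : forall k : 'I_N, 'rV[R]_(n k) -> 'rV[R]_(n k).
Variable y : R -> profile R n.
Hypothesis Hn : forall l, (0 < n l)%N.
Hypothesis Hpen : forall l, penalty (h l).
Hypothesis HQ : forall l (w : 'rV[R]_(n l)), is_choice (h l) w (Q l w).
Hypothesis Hy : forall t : R, 0 < t -> forall l,
  is_derive t 1 (fun s => y s l) (payv U l (fun l' => Q l' (y t l'))).

Definition X (t : R) : profile R n := fun l => Q l (y t l).

Lemma X_mixed t l : mixed (X t l). Proof. by case: (HQ l (y t l)). Qed.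

Definition vanish l (i : 'I_(n l)) :=
  forall e : R, 0 < e -> \forall t \near +oo, X t l 0 i < e.

Lemma main_ext k r (p p' : 'rV[R]_(n k)) :
  (forall l i, ~ surv U r l i -> @vanish l i) ->
  mixed p -> mixed p' ->
  (forall b : pure_profile n, (forall l, l != k -> surv U r l (b l)) ->
     udev U p (vx R N n b) < udev U p' (vx R N n b)) ->
  forall e : R, 0 < e -> \forall t \near +oo, exists2 a, p 0 a != 0 & X t k 0 a < e.
Proof.
move=> IH mp mp' dom e e0.
set q := p' - p.
pose Sb := fun l (i : 'I_(n l)) => `[< surv U r l i >].
pose good := fun b : pure_profile n => [forall l, (l != k) ==> Sb l (b l)].
have goodP b : good b -> forall l, l != k -> surv U r l (b l).
  by move=> /forallP G l lk; have := G l; rewrite lk /= => /asboolP.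
have [d d0 Hd] : exists2 d : R, 0 < d &
    forall b, good b -> d <= udev U q (vx R N n b).
  exists (\big[Order.min/1]_(b | good b) udev U q (vx R N n b)).
    apply: lt_bigmin => // b /goodP gb.
    by rewrite /q udevB subr_gt0; apply: dom.
  by move=> b gb; apply: bigmin_le_cond.
pose C := \sum_(b : pure_profile n) `|udev U q (vx R N n b)|.
have C0 : 0 <= C by apply: sumr_ge0 => *.
have HC b : - C <= udev U q (vx R N n b).
  have : `|udev U q (vx R N n b)| <= C.
    by rewrite /C (bigD1 b) //= lerDl; apply: sumr_ge0 => *.
  have := ler_norm (- udev U q (vx R N n b)); rewrite normrN; lra.
pose S := \sum_(l | l != k) (n l)%:R : R.
have S0 : 0 <= S by apply: sumr_ge0 => *; exact: ler0n.
pose K := (d + C) * (S + 1).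
have K0 : 0 < K by apply: mulr_gt0; lra.
pose eps := d / (2 * K).
have eps0 : 0 < eps by apply: divr_gt0 => //; lra.
have nearA : \forall t \near +oo, forall l (i : 'I_(n l)),
    X t l 0 i * (~~ Sb l i)%:R <= eps.
  apply: filter_forall => l; apply: filter_forall => i.
  case: (boolP (Sb l i)) => [_|/asboolPn ns].
    by apply: nearW => t; rewrite /= mulr0n mulr0 ltW.
  apply: filterS (IH l i ns eps eps0) => t /= H.
  by rewrite mulr1n mulr1 ltW.
have [T0 [_ HT0]] : \forall t \near +oo, d / 2 <= udev U q (X t).
  apply: filterS nearA => t Ht.
  have gd : forall b : pure_profile n, (forall l, l != k -> Sb l (b l)) ->
      d <= udev U q (vx R N n b).
    by move=> b gb; apply: Hd; apply/forallP => l; apply/implyP; exact: gb.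
  have G := @gap R N n U k q (X t) Sb d C (Hn k) (ltW d0) C0
    (fun l _ => X_mixed t l) gd HC.
  have HB : \sum_(l | l != k) \sum_i X t l 0 i * (~~ Sb l i)%:R <= S * eps.
    rewrite /S mulr_suml; apply: ler_sum => l _.
    apply: le_trans (_ : \sum_(i < n l) eps <= _).
      by apply: ler_sum => i _; exact: Ht.
    by rewrite sumr_const card_ord mulr_natl.
  have HK : (d + C) * (S * eps) <= d / 2.
    have -> : d / 2 = K * eps by rewrite /eps; field; lra.
    rewrite mulrA; apply: ler_wpM2r; first exact: ltW.
    apply: ler_wpM2l; lra.
  have := ler_wpM2l (_ : 0 <= d + C) HB.
  move=> /(_ ltac:(lra)) HB2.
  lra.
pose T := Num.max T0 0 + 1.
have m1 : T0 <= Num.max T0 0 by rewrite le_max lexx.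
have m2 : 0 <= Num.max T0 0 by rewrite le_max lexx orbT.
have T0T : T0 < T by rewrite /T; lra.
have T0pos : 0 < T by rewrite /T; lra.
pose g := fun s => pairing (y s k) q.
have Hg : forall s : R, 0 < s -> is_derive s 1 g (udev U q (X s)).
  move=> s s0; rewrite -pairing_payv /g; exact: (is_derive_pairing q (Hy s s0 k)).
have growth : forall t, T <= t -> g T + d / 2 * (t - T) <= g t.
  move=> t Tt.
  have [c cin Ec] : exists2 c, c \in `[T, t]%R & g t - g T = udev U q (X c) * (t - T).
    apply: MVT_segment => //.
      move=> s; rewrite in_itv /= => /andP [Ts _]; apply: Hg; lra.
    apply: continuous_in_subspaceT => s; rewrite inE /= in_itv /= => /andP [Ts _].
    by apply: is_derive_cont (Hg s _); lra.
  move: cin; rewrite in_itv /= => /andP [Tc _].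
  have Dc : d / 2 <= udev U q (X c) by apply: HT0; lra.
  have : d / 2 * (t - T) <= udev U q (X c) * (t - T).
    by apply: ler_wpM2r => //; lra.
  lra.
have [M HM] := hmax R (n k) (h k) (Hn k) (Hpen k).
pose hmn := h k (Q k 0).
have Hmn : forall z, mixed z -> hmn <= h k z := hmin (HQ k 0).
pose e' := Num.min e 1.
have e'0 : 0 < e' by rewrite /e' lt_min e0 ltr01.
have e'1 : e' <= 1 by rewrite /e' ge_min lexx orbT.
have e'e : e' <= e by rewrite /e' ge_min lexx.
pose B0 := h k p - hmn + (M - hmn) / e'.
pose Tt := T + 2 / d * `|B0 - (h k p - h k p') - g T|.
exists Tt; split; first exact: num_real.
move=> t Ttt.
have Tt0 : 0 <= 2 / d * `|B0 - (h k p - h k p') - g T|.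
  by apply: mulr_ge0; [apply: divr_ge0; lra | exact: normr_ge0].
have Tt1 : T <= t by rewrite /Tt in Ttt; lra.
have gt : B0 - (h k p - h k p') < g t.
  have := growth t Tt1.
  have : `|B0 - (h k p - h k p') - g T| < d / 2 * (t - T).
    have -> : `|B0 - (h k p - h k p') - g T| =
        d / 2 * (2 / d * `|B0 - (h k p - h k p') - g T|).
      by field; lra.
    rewrite ltr_pM2l; last lra.
    by rewrite /Tt in Ttt; lra.
  have := ler_norm (B0 - (h k p - h k p') - g T); lra.
case: (pselect (exists2 a, p 0 a != 0 & X t k 0 a < e')) => [[a pa xa]|nex].
  by exists a => //; apply: lt_le_trans xa e'e.
exfalso.
have supp : forall a, p 0 a != 0 -> e' <= X t k 0 a.
  move=> a pa; rewrite leNgt; apply/negP => xa; apply: nex; by exists a.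
have ob := opt_bound (HQ k (y t k)) mp e'0 e'1 supp HM.
have hx := Hmn _ (X_mixed t k).
have op := (proj2 (HQ k (y t k))) p' mp'.
have gE : g t = pairing (y t k) p' - pairing (y t k) p by rewrite /g pairingB.
have : (M - h k (X t k)) / e' <= (M - hmn) / e'.
  by apply: ler_wpM2r; [rewrite invr_ge0; lra | lra].
rewrite /X /B0 in ob hx gt gE * => H.
lra.
Qed.

Lemma surv_vanish r : forall l i, ~ surv U r l i -> @vanish l i.
Proof.
elim: r => [|r IHr] l i /=.
  by move=> H; exfalso; apply: H.
move=> H.
case: (pselect (surv U r l i)) => si; last exact: IHr.
have : exists p', mixed_on (surv U r l) p' /\ forall x : profile R n,
    (forall l', l' != l -> mixed_on (surv U r l') (x l')) ->
    udev U (delta_mx 0 i) x < udev U p' x.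
  by apply: contrapT => nex; apply: H; split.
move=> [p' [[mp' _] dom]] e e0.
have := @main_ext l r (delta_mx 0 i) p' IHr (delta_mixed _ _ i) mp' _ e e0.
move=> /(_ _) H2.
have : \forall t \near +oo, exists2 a, (delta_mx 0 i : 'rV[R]_(n l)) 0 a != 0 & X t l 0 a < e.
  apply: H2 => b gb; apply: dom => l' l'l; exact: vx_mixed_on (gb l' l'l).
apply: filterS => t [a pa xa].
by move: pa xa; rewrite delta_entry; case: (i =P a) => [<- //|_]; rewrite mulr0n eqxx.
Qed.

Lemma final_ext k (p : 'rV[R]_(n k)) : dominated U p \/ iter_dominated U p ->
  forall e : R, 0 < e -> \forall t \near +oo, exists2 a, p 0 a != 0 & X t k 0 a < e.
Proof.
case=> [[mp [p' [mp' dom]]]|[r [[mp _] [p' [[mp' _] dom]]]]].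
  apply: (@main_ext k 0 p p') => //.
    by move=> l i /= H; exfalso; apply: H.
  by move=> b _; apply: dom => l _; exact: delta_mixed.
apply: (@main_ext k r p p') => //.
  exact: surv_vanish.
by move=> b gb; apply: dom => l lk; exact: vx_mixed_on (gb l lk).
Qed.

End Main.

Lemma supp_cvg (R : realType) m (p : 'rV[R]_m) (z : R -> 'rV[R]_m) :
  mixed p -> (forall t, mixed (z t)) ->
  (forall e : R, 0 < e -> \forall t \near +oo, exists2 a, p 0 a != 0 & z t 0 a < e) ->
  supp_min p (z t) @[t --> +oo] --> 0%E.
Proof.
move=> mp mz H P /= hP.
have hP' : nbhs (0:R) (fun r => P r%:E) := hP.
case/nbhs_ballP: hP' => e /= e0 he.
apply: filterS (H e e0) => t [a pa za].
rewrite /supp_min.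
have Hle := @bigmin_le_cond _ _ _ +oo%E a (fun i => p 0 i != 0) (fun i => (z t 0 i)%:E) pa.
have [i0 _ E] := @eq_bigmin _ _ _ +oo%E a (fun i => p 0 i != 0) (fun i => (z t 0 i)%:E) pa
  (fun i _ => leey _).
rewrite /= E; apply: he.
rewrite E lee_fin in Hle; rewrite /ball /= sub0r normrN.
have z0 : 0 <= z t 0 i0 by case: (mz t).
by rewrite ger0_norm //; apply: le_lt_trans Hle za.
Qed.


Theorem theorem4p1 (R : realType) (N : nat) (n : 'I_N -> nat)
  (U : forall k : 'I_N, pure_profile n -> R)
  (h : forall k : 'I_N, 'rV[R]_(n k) -> R)
  (Q : forall k : 'I_N, 'rV[R]_(n k) -> 'rV[R]_(n k))
  (y : R -> profile R n)
  (k : 'I_N) (p : 'rV[R]_(n k)) :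
  (forall l, (0 < n l)%N) ->
  (forall l, penalty (h l)) ->
  (forall l (w : 'rV[R]_(n l)), is_choice (h l) w (Q l w)) ->
  (forall t : R, 0 < t -> forall l,
     is_derive t 1 (fun s => y s l)
       (payv U l (fun l' => Q l' (y t l')))) ->
  (dominated U p \/ iter_dominated U p) ->
  supp_min p (Q k (y t k)) @[t --> +oo] --> 0%E.
Proof.
move=> Hn Hpen HQ Hy Hd.
have mp : mixed p by case: Hd => [[]|[r [[mp _] _]]].
exact: (@supp_cvg R (n k) p (fun t => X R N n Q y t k) mp
  (fun t => @X_mixed R N n h Q y HQ t k) (@final_ext R N n U h Q y Hn Hpen HQ Hy k p Hd)).
Qed.
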